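(* For every integer $m\ge2$ and every $\alpha\in[0,1]$, the randomized rule \textsc{SmartDictatorship} (with parameter $\alpha$) has distortion at most $2+\alpha-2/m$ on $\alpha$-decisive metric spaces.
   Context: An election: voters $V=\{1,\dots,n\}$, a fixed finite set $C$ of $m$ candidates, a profile of linear orders over $C$; $\mathrm{top}(i)$ is $i$'s first choice; $\mathrm{plu}(a)=|\{i:\mathrm{top}(i)=a\}|$. A distance function $d$ on $V\cup C$ is nonnegative, symmetric and satisfies the triangle inequality (co-location allowed); consistent with the profile if $d(i,c)\le d(i,c')$ whenever $i$ ranks $c$ above $c'$; $\alpha$-decisive if $d(i,\mathrm{top}(i))\le\alpha\,d(i,c)$ for all $i$ and $c\ne\mathrm{top}(i)$. $\mathrm{SC}(c)=\sum_i d(i,c)$. The distortion of a randomized rule $f$ on $\alpha$-decisive spaces is $\sup_\sigma\sup_d \mathbb{E}[\mathrm{SC}(f(\sigma))]/\min_c\mathrm{SC}(c)$ over $\alpha$-decisive consistent $d$. \textsc{SmartDictatorship}: if some candidate $a$ has $\mathrm{plu}(a)\ge(1+\alpha)n/2$, it chooses one such candidate (arbitrarily) with probability $1$; otherwise it chooses each candidate $a$ with probability proportional to $\mathrm{plu}(a)/\bigl(n-\frac{2}{1+\alpha}\mathrm{plu}(a)\bigr)$. *)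

(* Defs.v *)
From HB Require Import structures.
From mathcomp Require Import all_boot all_order all_algebra all_fingroup.
Set Implicit Arguments. Unset Strict Implicit. Unset Printing Implicit Defensive.
Import Order.TTheory GRing.Theory Num.Theory.
Local Open Scope ring_scope.

(* Voters are 'I_n, candidates are 'I_m.
   A profile is rk : 'I_n -> {perm 'I_m}; rk i c is the position of candidate c
   in voter i's ranking (position 0 = first choice).  Points of the space V \cup C are 'I_n + 'I_m. *)

Definition profile (n m : nat) := 'I_n -> {perm 'I_m}.

Definition ranks_above n m (rk : profile n m) (i : 'I_n) (c c' : 'I_m) : bool :=
  (rk i c < rk i c')%N.

Definition is_top n m (rk : profile n m) (i : 'I_n) (c : 'I_m) : bool :=
  (rk i c == 0%N :> nat).

Definition plu n m (rk : profile n m) (a : 'I_m) : nat :=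
  #|[set i : 'I_n | is_top rk i a]|.

Definition is_distance (R : realFieldType) (X : Type) (d : X -> X -> R) : Prop :=
  [/\ forall x, d x x = 0,
      forall x y, 0 <= d x y,
      forall x y, d x y = d y x
    & forall x y z, d x z <= d x y + d y z].

Definition consistent (R : realFieldType) n m (rk : profile n m)
  (d : 'I_n + 'I_m -> 'I_n + 'I_m -> R) : Prop :=
  forall i c c', ranks_above rk i c c' -> d (inl i) (inr c) <= d (inl i) (inr c').

Definition decisive (R : realFieldType) (alpha : R) n m (rk : profile n m)
  (d : 'I_n + 'I_m -> 'I_n + 'I_m -> R) : Prop :=
  forall i c c', is_top rk i c -> c' != c ->
    d (inl i) (inr c) <= alpha * d (inl i) (inr c').

Definition SC (R : realFieldType) n m (d : 'I_n + 'I_m -> 'I_n + 'I_m -> R)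
  (c : 'I_m) : R := \sum_(i < n) d (inl i) (inr c).

Definition sd_weight (R : realFieldType) (alpha : R) n m (rk : profile n m)
  (a : 'I_m) : R :=
  (plu rk a)%:R / (n%:R - 2 / (1 + alpha) * (plu rk a)%:R).

Definition smart_dictatorship (R : realFieldType) (alpha : R) n m
  (rk : profile n m) (p : 'I_m -> R) : Prop :=
  (exists a, (1 + alpha) * n%:R / 2 <= (plu rk a)%:R /\
             forall b, p b = (b == a)%:R)
  \/
  ((forall a, (plu rk a)%:R < (1 + alpha) * n%:R / 2) /\
   forall b, p b = sd_weight alpha rk b / \sum_(a < m) sd_weight alpha rk a).

(* Main.v *)
Require Import Defs.
From HB Require Import structures.
From mathcomp Require Import all_boot all_order all_algebra all_fingroup.
From mathcomp Require Import ring lra.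
Import Order.TTheory GRing.Theory Num.Theory.
Local Open Scope ring_scope.
Lemma hmam (R : realFieldType) (m : nat) (y : 'I_m -> R) :
  (0 < m)%N -> (forall a, 0 < y a) ->
  m%:R ^+ 2 <= (\sum_a y a) * (\sum_a (y a)^-1).
Proof.
move=> hm hy.
set T := \sum_a y a.
have a0 : 'I_m := Ordinal hm.
have Tpos : 0 < T.
  rewrite /T (bigD1 a0) //=; apply: ltr_wpDr; last exact: hy.
  by apply: sumr_ge0 => i _; apply: ltW.
have mpos : 0 < m%:R :> R by rewrite ltr0n.
set y0 := T / m%:R.
have y0pos : 0 < y0 by apply: divr_gt0.
have tan : forall a, 2 / y0 - y a / y0 ^+ 2 <= (y a)^-1.
  move=> a; rewrite -subr_ge0.
  have -> : (y a)^-1 - (2 / y0 - y a / y0 ^+ 2) = (y a - y0) ^+ 2 / (y a * y0 ^+ 2).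
    by field; apply/andP; split; apply: lt0r_neq0.
  apply: divr_ge0; first exact: sqr_ge0.
  by apply: mulr_ge0; [apply: ltW | apply: sqr_ge0].
have : \sum_a (2 / y0 - y a / y0 ^+ 2) <= \sum_a (y a)^-1.
  by apply: ler_sum => a _; exact: tan.
rewrite sumrB sumr_const card_ord -mulr_suml => h.
move: h; set L := (X in X <= _ -> _).
have -> : L = m%:R ^+ 2 / T.
  rewrite /L /y0; change (\sum_i y i) with T; rewrite -[(_ / _) *+ m]mulr_natr; field; apply/andP; split; apply: lt0r_neq0 => //.
rewrite ler_pdivrMr // => h.
by rewrite mulrC.
Qed.

Lemma case2 (R : realFieldType) (m : nat) (alpha n S : R) (P X SCa : 'I_m -> R) :
  (2 <= m)%N -> 0 <= alpha -> 0 <= S ->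
  \sum_a P a = n -> \sum_a X a = S ->
  (forall a, 0 <= P a) -> (forall a, 0 <= X a) ->
  (forall a, 2 * P a < (1 + alpha) * n) ->
  (forall a, P a * SCa a <= P a * S + ((1 + alpha) * n - 2 * P a) * X a) ->
  \sum_a (P a / (n - 2 / (1 + alpha) * P a)) /
     (\sum_b P b / (n - 2 / (1 + alpha) * P b)) * SCa a
  <= (2 + alpha - 2 / m%:R) * S.
Proof.
move=> hm ha hS hP hX Pge Xge Plt key.
have m0 : (0 < m)%N by apply: leq_trans hm.
have a0 : 'I_m := Ordinal m0.
have hal : 0 < 1 + alpha by lra.
have hal0 : 1 + alpha != 0 by apply: lt0r_neq0.
have mpos : 0 < m%:R :> R by rewrite ltr0n.
have npos : 0 < n.
  have := Plt a0; have := Pge a0 => h1 h2.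
  have : 0 < (1 + alpha) * n by lra.
  by rewrite pmulr_rgt0.
pose b := 2 / (1 + alpha).
have bpos : 0 < b by rewrite /b divr_gt0 // ltr0n.
pose y a := n - b * P a.
have hy : forall a, 0 < y a.
  move=> a.
  have e : (1 + alpha) * y a = (1 + alpha) * n - 2 * P a by rewrite /y /b; field.
  have : 0 < (1 + alpha) * y a by rewrite e; have := Plt a; lra.
  by rewrite pmulr_rgt0.
have hy0 : forall a, y a != 0 by move=> a; apply: lt0r_neq0.
pose W := \sum_a P a / y a.
change (\sum_a (P a / y a) / W * SCa a <= (2 + alpha - 2 / m%:R) * S).
pose T := \sum_a y a.
have eT : T = n * (m%:R - b).
  rewrite /T /y sumrB sumr_const card_ord -mulr_sumr hP -mulr_natr; ring.
have Tpos : 0 < T.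
  rewrite /T (bigD1 a0) //=; apply: ltr_wpDr; last exact: hy.
  by apply: sumr_ge0 => i _; apply: ltW.
have mb : 0 < m%:R - b.
  by move: Tpos; rewrite eT pmulr_rgt0.
pose Z := \sum_a (y a)^-1.
have hZ : m%:R ^+ 2 <= T * Z by apply: hmam.
have eW : b * W = n * Z - m%:R.
  rewrite /W /Z mulr_sumr mulr_sumr.
  rewrite (eq_bigr (fun a => n * (y a)^-1 - 1)); last first.
    move=> a _; move: (hy0 a); rewrite /y => h; field; exact: h.
  by rewrite sumrB sumr_const card_ord -mulr_natr mul1r.
have hW : m%:R <= W * (m%:R - b).
  have : 0 <= b * (W * (m%:R - b) - m%:R).
    rewrite mulrBr mulrA eW.
    move: hZ; rewrite eT; nra.
  by rewrite pmulr_rge0 // subr_ge0.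
have Wpos : 0 < W.
  have : 0 < W * (m%:R - b) by lra.
  by rewrite pmulr_lgt0.
have hsum : \sum_a (P a / y a) * SCa a <= W * S + (1 + alpha) * \sum_a X a.
  rewrite mulr_sumr /W mulr_suml -big_split /=.
  apply: ler_sum => a _.
  have e : (P a / y a) * SCa a = (P a * SCa a) / y a by rewrite mulrAC.
  rewrite e.
  have e2 : P a / y a * S + (1 + alpha) * X a
            = (P a * S + ((1 + alpha) * n - 2 * P a) * X a) / y a.
    rewrite /y /b; field; rewrite hal0 /=; apply: lt0r_neq0; have := Plt a; lra.
  rewrite e2 ler_pM2r; first exact: key.
  by rewrite invr_gt0.
rewrite hX in hsum.
have -> : \sum_i P i / y i / W * SCa i = (\sum_i P i / y i * SCa i) / W.
  rewrite mulr_suml; apply: eq_bigr => a _; by rewrite mulrAC.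
rewrite ler_pdivrMr //.
have ek : (1 + alpha - 2 / m%:R) * W - (1 + alpha)
          = (1 + alpha) / m%:R * (W * (m%:R - b) - m%:R).
  rewrite /b; field; rewrite hal0 /=; apply: lt0r_neq0 => //.
have hk : 0 <= S * ((1 + alpha - 2 / m%:R) * W - (1 + alpha)).
  rewrite ek; apply: mulr_ge0 => //; apply: mulr_ge0; last by lra.
  by apply: divr_ge0; lra.
lra.
Qed.

Theorem theorem3 (R : realFieldType) (m : nat) (alpha : R) :
  (2 <= m)%N -> 0 <= alpha <= 1 ->
  forall (n : nat) (rk : profile n m) (d : 'I_n + 'I_m -> 'I_n + 'I_m -> R),
    is_distance d -> consistent rk d -> decisive alpha rk d ->
    forall p : 'I_m -> R, smart_dictatorship alpha rk p ->
    forall c : 'I_m,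
      \sum_(a < m) p a * SC d a <= (2 + alpha - 2 / m%:R) * SC d c.
Proof.
move=> hm /andP[ha0 ha1] n rk d [d0 dge dsym dtri] hcons hdec p hp c.
have m0 : (0 < m)%N by apply: leq_trans hm.
have mpos : 0 < m%:R :> R by rewrite ltr0n.
have topex : forall i, exists a, is_top rk i a.
  move=> i; exists ((rk i)^-1 (Ordinal m0))%g; by rewrite /is_top permKV.
have topun : forall i a b, is_top rk i a -> is_top rk i b -> a = b.
  move=> i a b /eqP ha /eqP hb; apply: (perm_inj (s := rk i)); apply: val_inj.
  by rewrite /= ha hb.
have htop1 : forall i, \sum_a (is_top rk i a)%:R = 1 :> R.
  move=> i; have [a0 h0] := topex i.
  rewrite (bigD1 a0) //= h0 big1 ?addr0 // => b hb.
  case: (boolP (is_top rk i b)) => // hb'.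
  by move: hb; rewrite (topun _ _ _ hb' h0) eqxx.
have hpart : forall f : 'I_n -> R,
    \sum_a \sum_(i | is_top rk i a) f i = \sum_i f i.
  move=> f; under eq_bigr do rewrite big_mkcond.
  rewrite exchange_big; apply: eq_bigr => i _.
  rewrite -[RHS]mul1r -(htop1 i) mulr_suml; apply: eq_bigr => a _.
  by case: (is_top rk i a); rewrite ?mul1r ?mul0r.
have hPdef : forall a, (plu rk a)%:R = \sum_(i | is_top rk i a) (1 : R).
  move=> a; rewrite /plu -sum1_card natr_sum; apply: eq_bigl => i.
  by rewrite inE.
have hn : n%:R = \sum_(i < n) (1 : R) by rewrite sumr_const card_ord.
pose x i := d (inl i) (inr c).
pose S := SC d c.
pose X a := \sum_(i | is_top rk i a) x i.
pose P a := (plu rk a)%:R : R.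
have hP : \sum_a P a = n%:R.
  by rewrite /P; under eq_bigr do rewrite hPdef; rewrite hpart hn.
have hX : \sum_a X a = S by rewrite /X hpart.
have Pge : forall a, 0 <= P a by move=> a; rewrite /P ler0n.
have Xge : forall a, 0 <= X a by move=> a; apply: sumr_ge0 => i _; apply: dge.
have Sge : 0 <= S by apply: sumr_ge0 => i _; apply: dge.
have hK : forall a, a != c ->
    P a * SC d a <= P a * S + ((1 + alpha) * n%:R - 2 * P a) * X a.
  move=> a hac.
  pose D := d (inr c) (inr a).
  pose Y := \sum_(i | ~~ is_top rk i a) x i.
  pose Q := \sum_(i | ~~ is_top rk i a) (1 : R).
  have eS : S = X a + Y by rewrite /S /SC (bigID (fun i => is_top rk i a)).
  have en : n%:R = P a + Q by rewrite hn (bigID (fun i => is_top rk i a)) /P hPdef.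
  have eSC : SC d a = \sum_(i | is_top rk i a) d (inl i) (inr a)
                    + \sum_(i | ~~ is_top rk i a) d (inl i) (inr a).
    by rewrite /SC (bigID (fun i => is_top rk i a)).
  have h1 : \sum_(i | is_top rk i a) d (inl i) (inr a) <= alpha * X a.
    rewrite /X mulr_sumr; apply: ler_sum => i hi.
    by apply: hdec; rewrite // eq_sym.
  have h2 : \sum_(i | ~~ is_top rk i a) d (inl i) (inr a) <= Y + Q * D.
    have -> : Q * D = \sum_(i | ~~ is_top rk i a) D.
      by rewrite /Q mulr_suml; apply: eq_bigr => i _; rewrite mul1r.
    rewrite /Y -big_split /=; apply: ler_sum => i _; exact: dtri.
  have h3 : P a * D <= (1 + alpha) * X a.
    have -> : P a * D = \sum_(i | is_top rk i a) D.
      by rewrite /P hPdef mulr_suml; apply: eq_bigr => i _; rewrite mul1r.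
    rewrite /X mulr_sumr; apply: ler_sum => i hi.
    apply: (le_trans (dtri _ (inl i) _)).
    rewrite (dsym (inr c)) -/(x i).
    have := hdec i a c hi; rewrite eq_sym => /(_ hac).
    rewrite -/(x i) => h; lra.
  have Qge : 0 <= Q by apply: sumr_ge0 => i _; apply: ler01.
  have h4 : P a * SC d a <= P a * (alpha * X a + Y + Q * D).
    by apply: ler_wpM2l => //; rewrite eSC; lra.
  have h5 : Q * (P a * D) <= Q * ((1 + alpha) * X a) by apply: ler_wpM2l.
  rewrite eS en; nra.
have hcoef : 1 <= 2 + alpha - 2 / m%:R.
  have : 2 / m%:R <= 1 :> R.
    by rewrite ler_pdivrMr // mul1r (ler_nat R 2 m).
  lra.
case: hp => [[a [ha hpa]] | [hlt hpb]].
- have -> : \sum_(b < m) p b * SC d b = SC d a.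
    rewrite (bigD1 a) //= hpa eqxx mul1r big1 ?addr0 // => b hb.
    by rewrite hpa (negbTE hb) mul0r.
  have SCge : 0 <= SC d a by apply: sumr_ge0 => i _; apply: dge.
  case: (eqVneq a c) => [-> | hac].
    rewrite -/S; nra.
  have hSa : SC d a <= S.
    have := hK a hac; have := Xge a; rewrite -/(P a) in ha.
    case: (ltrP 0 (P a)) => hPa.
      move=> hX0 hk.
      have : P a * SC d a <= P a * S.
        apply: (le_trans hk); have : ((1 + alpha) * n%:R - 2 * P a) * X a <= 0 by apply: mulr_le0_ge0 => //; lra.
        lra.
      by rewrite ler_pM2l.
    have hP0 : P a = 0 by apply/eqP; rewrite eq_le hPa Pge.
    have : n%:R <= 0 :> R by nra.
    rewrite lern0 => /eqP hn0 _ _.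
    rewrite (_ : SC d a = 0) // /SC big1 // => -[j hj] _.
    by exfalso; move: hj; rewrite hn0.
  rewrite -/S; have hh : 0 <= (2 + alpha - 2 / m%:R - 1) * S by apply: mulr_ge0 => //; lra.
  nra.
- under eq_bigr do rewrite hpb.
  apply: (@case2 R m alpha n%:R S P X (SC d)) => //.
  + by move=> a; have := hlt a; rewrite -/(P a); lra.
  + move=> a; case: (eqVneq a c) => [-> | hac]; last exact: hK.
    rewrite lerDl; apply: mulr_ge0 => //.
    by have := hlt c; rewrite -/(P c); lra.
Qed.
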